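(* Let $M$ and $N$ be finite groups. (1) If $M$ and $N$ are both nonabelian, then $K(M\times N)=1$. (2) If $M$ is nonabelian and $N$ is abelian, then $K(M\times N)=K(M)$.
   Context: For $\chi\in\mathrm{Irr}(G)$, the center of $\chi$ is $Z(\chi)=\{g\in G : |\chi(g)|=\chi(1)\}$. For a nonabelian group $G$, let $\mathcal{X}_G=\{\chi\in\mathrm{Irr}(G) : Z(\chi)>Z(G)\}$ (strict containment) and define $K(G)=\bigcap_{\chi\in\mathcal{X}_G}\ker(\chi)$; if $G$ is abelian, set $K(G)=G$. *)

(* Defs.v *)
From mathcomp Require Import all_boot all_order all_algebra all_fingroup all_solvable all_field all_character.
Set Implicit Arguments. Unset Strict Implicit. Unset Printing Implicit Defensive.
Import GroupScope.
Local Open Scope ring_scope.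

(* X_G = { chi in Irr(G) : Z(G) < Z(chi) } (strict containment), with
   Z(chi) the library character center 'Z(chi)%CF = [set g in G | |chi g| == chi 1].
   K(G) = intersection of ker chi over X_G (as a subset of G; the empty
   intersection is G), and K(G) = G if G is abelian. *)
Definition Kgrp (gT : finGroupType) (G : {group gT}) : {set gT} :=
  (if abelian G then G
  else G :&: \bigcap_(i : Iirr G | ('Z(G) \proper 'Z('chi[G]_i)%CF)%g) cfker 'chi[G]_i)%g.

(* Main.v *)
Require Import Defs.
From mathcomp Require Import all_boot all_order all_algebra all_fingroup all_solvable all_field all_character.
Set Implicit Arguments. Unset Strict Implicit. Unset Printing Implicit Defensive.
Import GroupScope Order.TTheory GRing.Theory Num.Theory.
Local Open Scope ring_scope.

Lemma isoX1 (gT1 gT2 : finGroupType) (M : {group gT1}) :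
  isom M (setX_group M (1%G : {group gT2})) (restrm (subsetT M) (@pairg1 gT1 gT2)).
Proof.
apply/isomP; split; first by rewrite injm_restrm ?injm_pairg1.
by rewrite morphim_restrm morphim_pairg1 setIid.
Qed.

Lemma iso1X (gT1 gT2 : finGroupType) (N : {group gT2}) :
  isom N (setX_group (1%G : {group gT1}) N) (restrm (subsetT N) (@pair1g gT1 gT2)).
Proof.
apply/isomP; split; first by rewrite injm_restrm ?injm_pair1g.
by rewrite morphim_restrm morphim_pair1g setIid.
Qed.

Lemma XdP (gT1 gT2 : finGroupType) (M : {group gT1}) (N : {group gT2}) :
  setX_group M (1%G : {group gT2}) \x setX_group (1%G : {group gT1}) N = setX_group M N.
Proof. exact: setX_dprod. Qed.

Definition DI (gT1 gT2 : finGroupType) (M : {group gT1}) (N : {group gT2})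
  (t : Iirr M) (u : Iirr N) : Iirr (setX_group M N) :=
  dprod_Iirr (XdP M N) (isom_Iirr (isoX1 gT2 M) t, isom_Iirr (iso1X gT1 N) u).

Lemma DI_onto (gT1 gT2 : finGroupType) (M : {group gT1}) (N : {group gT2})
  (k : Iirr (setX_group M N)) : exists t u, k = DI t u.
Proof.
rewrite -(inv_dprod_IirrK (XdP M N) k).
case: (inv_dprod_Iirr _ k) => a b.
exists (isom_Iirr (isom_sym (isoX1 gT2 M)) a), (isom_Iirr (isom_sym (iso1X gT1 N)) b).
by rewrite /DI !isom_IirrKV.
Qed.

Lemma DIE (gT1 gT2 : finGroupType) (M : {group gT1}) (N : {group gT2})
  (t : Iirr M) (u : Iirr N) (g : gT1 * gT2) : g \in setX M N ->
  'chi_(DI t u) g = 'chi_t g.1 * 'chi_u g.2.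
Proof.
case: g => m n; rewrite inE /= => /andP[Mm Nn].
have -> : (m, n) = ((m, 1%g) * (1%g, n))%g.
  by rewrite {1}/mul /= /mul_pair /= mulg1 mul1g.
rewrite /DI dprod_IirrE cfDprodE; first last.
- by rewrite inE /= Nn set11.
- by rewrite inE /= Mm set11.
rewrite !isom_IirrE.
have -> : ((m, 1%g) : gT1 * gT2) = restrm (subsetT M) (@pairg1 gT1 gT2) m by [].
have -> : ((1%g, n) : gT1 * gT2) = restrm (subsetT N) (@pair1g gT1 gT2) n by [].
by rewrite !cfIsomE.
Qed.

Lemma pairM (gT1 gT2 : finGroupType) (a b : gT1) (c d : gT2) :
  ((a, c) * (b, d))%g = ((a * b)%g, (c * d)%g).
Proof. by []. Qed.

Lemma center_setX (gT1 gT2 : finGroupType) (M : {group gT1}) (N : {group gT2}) :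
  'Z(setX M N)%g = setX 'Z(M)%g 'Z(N)%g.
Proof.
apply/setP => [[m n]]; rewrite in_setX /=.
apply/centerP/andP => [[/[!inE]/andP[Mm Nn] C] | [/centerP[Mm Cm] /centerP[Nn Cn]]].
  split; [rewrite Mm /= | rewrite Nn /=]; apply/centP => x Hx.
    have := C (x, 1%g); rewrite inE /= Hx group1 => /(_ isT) /(congr1 fst).
    by rewrite /commute !pairM.
  have := C (1%g, x); rewrite inE /= Hx group1 => /(_ isT) /(congr1 snd).
  by rewrite /commute !pairM.
split; first by rewrite inE Mm Nn.
move=> [x y]; rewrite inE /= => /andP[Mx Ny].
by rewrite /commute !pairM (Cm x Mx) (Cn y Ny).
Qed.

Lemma abelian_setX (gT1 gT2 : finGroupType) (M : {group gT1}) (N : {group gT2}) :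
  abelian (setX M N) -> abelian M && abelian N.
Proof.
move/center_idP; rewrite center_setX => E.
apply/andP; split; apply/center_idP; apply/eqP; rewrite eqEsubset center_sub /=;
  apply/subsetP => x Hx.
  have : (x, 1%g) \in setX 'Z(M)%g 'Z(N)%g by rewrite E inE /= Hx group1.
  by rewrite inE => /andP[].
have : (1%g, x) \in setX 'Z(M)%g 'Z(N)%g by rewrite E inE /= Hx group1.
by rewrite inE => /andP[].
Qed.

Lemma DI1 (gT1 gT2 : finGroupType) (M : {group gT1}) (N : {group gT2})
  (t : Iirr M) (u : Iirr N) : 'chi_(DI t u) 1%g = 'chi_t 1%g * 'chi_u 1%g.
Proof. by rewrite (DIE t u (group1 (setX_group M N))). Qed.

Lemma setX_sub1 (gT1 gT2 : finGroupType) (A B : {set gT1}) (N : {group gT2}) :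
  (setX A N \subset setX B N) = (A \subset B).
Proof.
apply/idP/idP => H.
  apply/subsetP => x Ax.
  have : (x, 1%g) \in setX B N by rewrite (subsetP H) // inE /= Ax group1.
  by rewrite inE => /andP[].
by rewrite setXS.
Qed.

Lemma setX_proper1 (gT1 gT2 : finGroupType) (A B : {set gT1}) (N : {group gT2}) :
  (setX A N \proper setX B N) = (A \proper B).
Proof. by rewrite !properE !setX_sub1. Qed.

Lemma noncentral (gT : finGroupType) (N : {group gT}) :
  ~~ abelian N -> exists2 n0, n0 \in N & n0 \notin 'Z(N)%g.
Proof.
move=> nN; case: (boolP (N \subset 'Z(N)%g)) => [sub|]; last by case/subsetPn=> x; exists x.
have : abelian N by apply/center_idP; apply/eqP; rewrite eqEsubset sub center_sub.
by rewrite (negbTE nN).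
Qed.

Lemma inkerG (gT : finGroupType) (G : {group gT}) (k : Iirr G) x :
  'chi_k x = 'chi_k 1%g -> x \in cfker 'chi_k.
Proof. by move=> E; rewrite cfkerEirr in_set E. Qed.

Lemma part1 (gT1 gT2 : finGroupType) (M : {group gT1}) (N : {group gT2}) :
  ~~ abelian M -> ~~ abelian N -> Kgrp (setX_group M N) = 1%g.
Proof.
move=> nM nN; rewrite /Kgrp.
have nG : ~~ abelian (setX_group M N).
  by apply/negP => /abelian_setX /andP[aM _]; rewrite aM in nM.
rewrite (negbTE nG).
have [n0 Nn0 nZn0] := noncentral nN.
have [m0 Mm0 nZm0] := noncentral nM.
have XG (t : Iirr M) : ('Z(setX M N) \proper 'Z('chi_(DI t (0 : Iirr N)))%CF)%g.
  rewrite properE; apply/andP; split.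
    rewrite -cap_cfcenter_irr; by apply/subsetP => x /bigcapP /(_ (DI t (0 : Iirr N)) isT).
  apply/subsetPn; exists (1%g, n0).
    have Gx : (1%g, n0) \in setX M N by rewrite inE /= group1 Nn0.
    rewrite irr_cfcenterE // DIE // DI1 /= irr0 cfun1E Nn0 cfun1E group1 !mulr1.
    by rewrite ger0_norm ?(ltW (irr1_gt0 _)).
  by rewrite center_setX inE /= negb_and nZn0 orbT.
have XG' (u : Iirr N) : ('Z(setX M N) \proper 'Z('chi_(DI (0 : Iirr M) u))%CF)%g.
  rewrite properE; apply/andP; split.
    rewrite -cap_cfcenter_irr; by apply/subsetP => x /bigcapP /(_ (DI (0 : Iirr M) u) isT).
  apply/subsetPn; exists (m0, 1%g).
    have Gx : (m0, 1%g) \in setX M N by rewrite inE /= group1 Mm0.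
    rewrite irr_cfcenterE // DIE // DI1 /= irr0 cfun1E Mm0 cfun1E group1 !mul1r.
    by rewrite ger0_norm ?(ltW (irr1_gt0 _)).
  by rewrite center_setX inE /= negb_and nZm0.
apply/trivgP/subsetP => [[m n]] /setIP[Gg /bigcapP Hall].
move: (Gg); rewrite inE => /andP[/= Mm Nn].
have m1 : m \in [1]%g.
  rewrite -(TI_cfker_irr M); apply/bigcapP => t _.
  rewrite cfkerEirr in_set; move/cfker1: (Hall _ (XG t)); rewrite DIE // DI1 /= irr0 !cfun1E Nn group1 !mulr1.
  by move=> ->.
have n1 : n \in [1]%g.
  rewrite -(TI_cfker_irr N); apply/bigcapP => u _.
  rewrite cfkerEirr in_set; move/cfker1: (Hall _ (XG' u)); rewrite DIE // DI1 /= irr0 !cfun1E Mm group1 !mul1r.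
  by move=> ->.
by rewrite (set1P m1) (set1P n1) inE.
Qed.

Lemma part2 (gT1 gT2 : finGroupType) (M : {group gT1}) (N : {group gT2}) :
  ~~ abelian M -> abelian N -> Kgrp (setX_group M N) = setX (Kgrp M) 1%g.
Proof.
move=> nM aN; rewrite /Kgrp.
have nG : ~~ abelian (setX_group M N).
  by apply/negP => /abelian_setX /andP[aM _]; rewrite aM in nM.
rewrite (negbTE nG) (negbTE nM).
have linN u : 'chi[N]_u \is a linear_char := char_abelianP N aN u.
have ZD (t : Iirr M) (u : Iirr N) : 'Z('chi_(DI t u))%CF = setX 'Z('chi_t)%CF N.
  apply/setP => [[m n]]; rewrite [in RHS]inE /=.
  case Nn: (n \in N); last first.
    rewrite andbF; apply/negbTE/negP => /(subsetP (cfcenter_sub _)).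
    by rewrite inE Nn andbF.
  case Mm: (m \in M); last first.
    have -> : (m \in 'Z('chi_t)%CF) = false.
      by apply/negbTE/negP => /(subsetP (cfcenter_sub _)); rewrite Mm.
    by apply/negbTE/negP => /(subsetP (cfcenter_sub _)); rewrite inE Mm.
  have Gg : (m, n) \in setX M N by rewrite inE /= Mm Nn.
  rewrite irr_cfcenterE // DIE // DI1 normrM (normC_lin_char (linN u)) // (lin_char1 (linN u)) !mulr1.
  by rewrite andbT irr_cfcenterE.
have ZG : 'Z(setX M N)%g = setX 'Z(M)%g N by rewrite center_setX (center_idP aN).
have XG (t : Iirr M) (u : Iirr N) : ('Z(setX M N) \proper 'Z('chi_(DI t u))%CF)%g = ('Z(M) \proper 'Z('chi_t)%CF)%g.
  by rewrite ZD ZG setX_proper1.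
have [m0 Mm0 nZm0] := noncentral nM.
have X0 : ('Z(M) \proper 'Z('chi[M]_0)%CF)%g.
  rewrite properE; apply/andP; split.
    rewrite -cap_cfcenter_irr; by apply/subsetP => x /bigcapP /(_ 0 isT).
  apply/subsetPn; exists m0 => //.
  by rewrite irr_cfcenterE // irr0 !cfun1E Mm0 group1 normr1.
apply/eqP; rewrite eqEsubset; apply/andP; split.
  apply/subsetP => [[m n]] /setIP[Gg /bigcapP Hall].
  move: (Gg); rewrite inE => /andP[/= Mm Nn].
  have Hk (t : Iirr M) (u : Iirr N) : ('Z(M) \proper 'Z('chi_t)%CF)%g ->
      'chi_t m * 'chi_u n = 'chi_t 1%g * 'chi_u 1%g.
    move=> Pt; have := Hall (DI t u); rewrite XG => /(_ Pt).
    by move/cfker1; rewrite DIE // DI1.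
  have n1 : n \in [1]%g.
    rewrite -(TI_cfker_irr N); apply/bigcapP => u _; rewrite cfkerEirr in_set.
    by have := Hk 0 u X0; rewrite irr0 !cfun1E Mm group1 !mul1r => ->.
  rewrite inE /= n1 andbT; apply/setIP; split => //; apply/bigcapP => t Pt.
  rewrite cfkerEirr in_set.
  by have := Hk t 0 Pt; rewrite irr0 !cfun1E Nn group1 !mulr1 => ->.
apply/subsetP => [[m n]]; rewrite inE /= => /andP[/setIP[Mm /bigcapP Hall] /set1P ->].
have Gg : (m, 1%g) \in setX M N by rewrite inE /= Mm group1.
apply/setIP; split => //.
apply/bigcapP => k; have [t [u ->]] := DI_onto k; rewrite XG => Pt.
apply: inkerG; rewrite DIE // DI1 /=.
by have := Hall t Pt; rewrite cfkerEirr in_set => /eqP ->.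
Qed.

Local Close Scope ring_scope.
Unset Implicit Arguments.

Theorem lemma3p2 (gT1 gT2 : finGroupType) (M : {group gT1}) (N : {group gT2}) :
  (~~ abelian M -> ~~ abelian N -> Kgrp (setX_group M N) = 1) /\
  (~~ abelian M -> abelian N -> Kgrp (setX_group M N) = setX (Kgrp M) 1).
Proof.
split; [exact: part1 | exact: part2].
Qed.
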